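(* For any linear graph-based classifier $h$ and any $n$ users with features in $\mathbb{R}^\ell$ and nonnegative embedding weights, the myopic best-response dynamics described below converge (i.e., reach a round after which no user's features change), and they do so after at most $n$ rounds.
   Context: Embeddings: $\phi(x_i;x_{-i})=\widetilde{w}_{ii}x_i+\sum_{j\neq i}\widetilde{w}_{ji}x_j$ with $\widetilde{w}_{ji}\ge0$. Classifier: $h_{\theta,b}(x_i;x_{-i})=\mathrm{sign}(\theta^\top\phi(x_i;x_{-i})+b)\in\{\pm1\}$, $\mathrm{sign}(0)=+1$. Cost: $c(x,x')=\|x-x'\|_2$. Dynamics: $x_i^{(0)}=x_i$; at each round all users update concurrently by $x_i^{(t+1)}=\arg\max_{x'} h(x';x_{-i}^{(t)})-c(x_i^{(t)},x')-\kappa_i^{(t)}$ with accumulated costs $\kappa_i^{(t)}$; concretely, user $i$ changes her features in a round only if she is currently classified $-1$ and some $x'$ with $h(x';x^{(t)}_{-i})=+1$ has $c(x_i^{(t)},x')\le2$, in which case she moves to the minimum-cost such point (embedding exactly on the boundary $\theta^\top\phi+b=0$); otherwise she stays. *)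

(* Defs.v *)
From HB Require Import structures.
From mathcomp Require Import all_boot all_order all_algebra.
From mathcomp Require Import all_classical all_reals.
Set Implicit Arguments. Unset Strict Implicit. Unset Printing Implicit Defensive.
Import Order.TTheory GRing.Theory Num.Theory.
Local Open Scope ring_scope.

(* Users are indexed by 'I_n, features are row vectors 'rV[R]_l.
   W j i is the embedding weight \tilde w_{ji} (W i i = \tilde w_{ii}). *)

Definition dotv (R : realType) (l : nat) (u v : 'rV[R]_l) : R :=
  \sum_(k < l) u 0 k * v 0 k.

Definition eucl (R : realType) (l : nat) (v : 'rV[R]_l) : R :=
  Num.sqrt (\sum_(k < l) v 0 k ^+ 2).

Definition cost (R : realType) (l : nat) (x x' : 'rV[R]_l) : R := eucl (x - x').

Definition sgn (R : realType) (r : R) : int := if 0 <= r then 1%R else (-1)%R.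

Definition embed (R : realType) (n l : nat) (W : 'M[R]_n) (x : 'I_n -> 'rV[R]_l)
  (i : 'I_n) (x' : 'rV[R]_l) : 'rV[R]_l :=
  W i i *: x' + \sum_(j < n | j != i) W j i *: x j.

Definition hcls (R : realType) (n l : nat) (theta : 'rV[R]_l) (b : R) (W : 'M[R]_n)
  (x : 'I_n -> 'rV[R]_l) (i : 'I_n) (x' : 'rV[R]_l) : int :=
  sgn (dotv theta (embed W x i x') + b).

Definition moves (R : realType) (n l : nat) (theta : 'rV[R]_l) (b : R) (W : 'M[R]_n)
  (x : 'I_n -> 'rV[R]_l) (i : 'I_n) : Prop :=
  hcls theta b W x i (x i) = (-1)%R /\
  exists x', hcls theta b W x i x' = 1%R /\ cost (x i) x' <= 2.

(* One round of concurrent myopic best responses: x is the profile at round t,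
   y the profile at round t+1. A mover goes to a minimum-cost point among
   those classified +1 (given the others' current features). *)
Definition br_step (R : realType) (n l : nat) (theta : 'rV[R]_l) (b : R) (W : 'M[R]_n)
  (x y : 'I_n -> 'rV[R]_l) : Prop :=
  forall i : 'I_n,
    (moves theta b W x i /\
       hcls theta b W x i (y i) = 1%R /\
       (forall x', hcls theta b W x i x' = 1%R -> cost (x i) (y i) <= cost (x i) x'))
    \/ (~ moves theta b W x i /\ y i = x i).

(* Main.v *)
Require Import Defs.
From HB Require Import structures.
From mathcomp Require Import all_boot all_order all_algebra.
From mathcomp Require Import all_classical all_reals.
From mathcomp Require Import lra.
Import Order.TTheory GRing.Theory Num.Theory.
Local Open Scope ring_scope.

Section S.
Variables (R : realType) (n l : nat) (W : 'M[R]_n) (th : 'rV[R]_l) (b : R).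

Lemma dotvD (u v : 'rV[R]_l) : dotv th (u + v) = dotv th u + dotv th v.
Proof. by rewrite /dotv -big_split; apply: eq_bigr => k _; rewrite mxE mulrDr. Qed.

Lemma dotv0 : dotv th 0 = 0.
Proof. by rewrite /dotv big1 // => k _; rewrite mxE mulr0. Qed.

Lemma dotvZ (a : R) (u : 'rV[R]_l) : dotv th (a *: u) = a * dotv th u.
Proof. by rewrite /dotv mulr_sumr; apply: eq_bigr => k _; rewrite mxE mulrCA. Qed.

Definition lin (x : 'I_n -> 'rV[R]_l) i :=
  \sum_(j < n | j != i) W j i * dotv th (x j).

Lemma hclsE x i x' :
  hcls th b W x i x' = sgn (W i i * dotv th x' + lin x i + b).
Proof.
rewrite /hcls /embed dotvD dotvZ.
rewrite (big_morph (dotv th) dotvD dotv0).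
by under eq_bigr do rewrite dotvZ.
Qed.

Lemma sgn1 (r : R) : sgn r = 1 <-> 0 <= r.
Proof. by rewrite /sgn; case: ifP => h; split. Qed.

Lemma sgnN1 (r : R) : sgn r = -1 <-> r < 0.
Proof.
rewrite /sgn; case: ifP => h; split => //.
  by move=> hr; rewrite ltNge h in hr.
by move=> _; rewrite ltNge h.
Qed.

Definition Sc x i := W i i * dotv th (x i) + lin x i + b.

Hypothesis HW : forall i j, 0 <= W i j.

Lemma lin_mono x y i : (forall j, dotv th (x j) <= dotv th (y j)) ->
  lin x i <= lin y i.
Proof. by move=> H; apply: ler_sum => j _; apply: ler_wpM2l. Qed.

Lemma Sc_mono x y i : (forall j, dotv th (x j) <= dotv th (y j)) ->
  Sc x i <= Sc y i.
Proof.
move=> H; rewrite /Sc lerD2r lerD //; first by apply: ler_wpM2l.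
exact: lin_mono.
Qed.

Lemma step_dot x y : br_step th b W x y ->
  forall j, dotv th (x j) <= dotv th (y j).
Proof.
move=> Hs j; case: (Hs j) => [[[Hm _] [Hy _]] | [_ ->]] //.
rewrite hclsE sgnN1 in Hm; rewrite hclsE sgn1 in Hy.
rewrite leNgt; apply/negP => hlt.
have := ler_wpM2l (HW j j) (ltW hlt); lra.
Qed.

Lemma step_mover x y i : br_step th b W x y -> y i <> x i ->
  Sc x i < 0 /\ 0 <= Sc y i.
Proof.
move=> Hs Hne; case: (Hs i) => [[[Hm _] [Hy _]] | [_ Heq]] //.
rewrite hclsE sgnN1 in Hm; rewrite hclsE sgn1 in Hy.
split; first by [].
have := @lin_mono x y i (@step_dot x y Hs); rewrite /Sc; lra.
Qed.

End S.
Arguments step_mover {R n l W th b} HW {x y i}.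
Arguments Sc_mono {R n l W th b} HW {x y} i.
Arguments step_dot {R n l W th b} HW {x y}.

Theorem corollary1 (R : realType) (n l : nat) (W : 'M[R]_n) (theta : 'rV[R]_l)
  (b : R) (X : nat -> 'I_n -> 'rV[R]_l) :
  (forall i j : 'I_n, 0 <= W i j) ->
  (forall t : nat, br_step theta b W (X t) (X t.+1)) ->
  exists T : nat, (T <= n)%N /\
    forall t : nat, (T <= t)%N -> forall i : 'I_n, X t.+1 i = X t i.
Proof.
move=> HW Hs.

pose stable t := forall i, X t.+1 i = X t i.
have stS : forall t, stable t -> stable t.+1.
  move=> t st.
  have E : X t.+1 = X t by apply: funext => j; exact: st j.
  move=> i; have := Hs t.+1 i; rewrite E.
  case=> [[Hm [Hy _]] | [_ ->]] //; exfalso.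
  case: (Hs t i) => [[_ [Hy' _]] | [Hnm _]].
    move: Hm => [Hm _]; rewrite (st i) in Hy'; rewrite Hy' in Hm; discriminate.
  exact: Hnm Hm.
pose P t := [set i | @Sc _ _ _ W theta b (X t) i < 0].
have Pdec : forall t, ~ stable t -> (#|P t.+1| < #|P t|)%N.
  move=> t nst.
  case: (boolP [forall i, X t.+1 i == X t i]) => [/forallP H|].
    by exfalso; apply: nst => i; apply/eqP.
  rewrite negb_forall => /existsP [i /eqP Hi].
  have [h1 h2] := step_mover HW (Hs t) Hi.
  apply: proper_card; apply/properP; split.
    apply/fintype.subsetP => j; rewrite !inE => hj.
    exact: le_lt_trans (Sc_mono HW j (step_dot HW (Hs t))) hj.
  exists i; first by rewrite inE.
  by rewrite inE -leNgt.
have key : forall t, (exists T, (T <= t)%N /\ stable T) \/ (#|P t| + t <= n)%N.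
  elim=> [|t IH].
    by right; rewrite addn0; apply: leq_trans (max_card _) _; rewrite card_ord.
  case: IH => [[T [HT st]]|IH]; first by left; exists T; split => //; apply: leqW.
  case: (boolP [forall i, X t.+1 i == X t i]) => [/forallP H|Hn].
    by left; exists t; split => // i; apply/eqP.
  right; have : (#|P t.+1| < #|P t|)%N.
    apply: Pdec => st; move: Hn; rewrite negb_forall => /existsP [i /eqP Hi].
    exact: Hi.
  move=> h1; rewrite addnS; apply: leq_trans IH; by rewrite -addSn leq_add2r.
have [T [HT stT]] : exists T, (T <= n)%N /\ stable T.
  case: (key n) => [//|Hc].
  exists n; split => // i.
  have P0 : #|P n| = 0%N by apply/eqP; rewrite -leqn0 -(leq_add2r n).
  case: (boolP (X n.+1 i == X n i)) => [/eqP //|/eqP Hne].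
  have [h1 _] := step_mover HW (Hs n) Hne.
  have : i \in P n by rewrite inE.
  by rewrite (cards0_eq P0) inE.
exists T; split => // t Ht.
have -> : t = (T + (t - T))%N by rewrite subnKC.
elim: (t - T)%N => [|k IH]; first by rewrite addn0.
by rewrite addnS; apply: stS.
Qed.
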